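(* Let $G$ be a connected weighted multigraph on the vertex set $V$, $|V|=n\ge2$, with positive edge weights and Laplacian matrix $L$, and let $d^r$ be the resistance distance on $V$. Then for all distinct $i,j\in V$, $$d^r(i,j)=n^{-1}\bigl((L_{jj})^{-1}_i+(L_{ii})^{-1}_j\bigr)\mathbf 1,$$ where $\mathbf 1$ is the vector of $n-1$ ones and $(L_{jj})^{-1}_i$ is the row indexed by $i$ of the inverse of the principal submatrix $L_{jj}$.
   Context: Loops and multiple edges are allowed. The weighted adjacency matrix $A=(a_{ij})$ has $a_{ij}$ equal to the sum of weights of the edges joining $i$ and $j$; $L=\operatorname{diag}(A\mathbf 1)-A$. $L_{jj}$ is $L$ with row $j$ and column $j$ deleted (indexed by $V\setminus\{j\}$). The resistance distance is $d^r(i,j)=(e_i-e_j)^{\mathsf T}L^{+}(e_i-e_j)$ with $L^+$ the Moore–Penrose inverse (the effective resistance with edge conductances equal to the weights). *)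

(* Defs.v *)
From mathcomp Require Import all_boot all_order all_algebra.
Set Implicit Arguments. Unset Strict Implicit. Unset Printing Implicit Defensive.
Import Order.TTheory GRing.Theory Num.Theory.
Local Open Scope ring_scope.

Section Graphs.
Variable R : realFieldType.
Variable n : nat.
(* A weighted multigraph on V = 'I_n: a finite type of edges E, each edge e
   joining the (unordered) pair of endpoints [ends e] with weight [w e].
   Loops (ends e = (i,i)) and multiple edges are allowed. *)
Variable E : finType.
Variable ends : E -> 'I_n * 'I_n.
Variable w : E -> R.

Definition joins (e : E) (i j : 'I_n) : bool :=
  (ends e == (i, j)) || (ends e == (j, i)).

Definition adjmx : 'M[R]_n := \matrix_(i, j) \sum_(e | joins e i j) w e.

Definition laplacian : 'M[R]_n :=
  \matrix_(i, j) ((i == j)%:R * (\sum_k adjmx i k) - adjmx i j).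

Definition adjacent : rel 'I_n := fun i j => [exists e, joins e i j].

Definition connected_graph : Prop := forall i j : 'I_n, connect adjacent i j.

Definition pos_weights : Prop := forall e, 0 < w e.
End Graphs.

(* X is the Moore–Penrose inverse of the real matrix A (Penrose equations;
   over the reals the conjugate transpose is the transpose). *)
Definition is_MP_inverse (R : realFieldType) (n : nat) (A X : 'M[R]_n) : Prop :=
  [/\ A *m X *m A = A, X *m A *m X = X, (A *m X)^T = A *m X & (X *m A)^T = X *m A].

(* resistance distance (e_i - e_j)^T Lp (e_i - e_j), where Lp = L^+ *)
Definition resistance (R : realFieldType) (n : nat) (Lp : 'M[R]_n) (i j : 'I_n) : R :=
  let v : 'cV[R]_n := delta_mx i 0 - delta_mx j 0 in (v^T *m Lp *m v) 0 0.

(* principal submatrix with row and column j deleted, indexed by V \ {j}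
   via the order-preserving bijection [lift j] : 'I_m.+1 -> V \ {j} *)
Definition del_mx (R : ringType) (m : nat) (j : 'I_m.+2) (A : 'M[R]_m.+2) : 'M[R]_m.+1 :=
  row' j (col' j A).

Definition sub_idx (m : nat) (j i : 'I_m.+2) : 'I_m.+1 := odflt ord0 (unlift j i).

Definition rowsum (R : ringType) (m : nat) (M : 'M[R]_m) (k : 'I_m) : R :=
  \sum_l M k l.

(* Main.v *)
Require Import Defs.
From mathcomp Require Import all_boot all_order all_algebra.
From mathcomp Require Import ring lra.
Import Order.TTheory GRing.Theory Num.Theory.
Local Open Scope ring_scope.
Module Helpers.
Set Implicit Arguments. Unset Strict Implicit.

Lemma joinsC (n : nat) (E : finType) (ends : E -> 'I_n * 'I_n) e a b :
  joins ends e a b = joins ends e b a.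
Proof. by rewrite /joins orbC. Qed.

Lemma adj_sym (R : realFieldType) (n : nat) (E : finType)
  (ends : E -> 'I_n * 'I_n) (w : E -> R) a b :
  adjmx ends w a b = adjmx ends w b a.
Proof. by rewrite !mxE; apply: eq_bigl => e; rewrite joinsC. Qed.

Lemma lapE (R : realFieldType) (n : nat) (E : finType)
  (ends : E -> 'I_n * 'I_n) (w : E -> R) a b :
  laplacian ends w a b = (a == b)%:R * (\sum_k adjmx ends w a k) - adjmx ends w a b.
Proof. by rewrite mxE. Qed.

Lemma lap_sym (R : realFieldType) (n : nat) (E : finType)
  (ends : E -> 'I_n * 'I_n) (w : E -> R) :
  (laplacian ends w)^T = laplacian ends w.
Proof.
apply/matrixP => a b; rewrite mxE !lapE.
case: (eqVneq a b) => [->|hab] //.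
by rewrite !mul0r adj_sym.
Qed.

Lemma lap_row0 (R : realFieldType) (n : nat) (E : finType)
  (ends : E -> 'I_n * 'I_n) (w : E -> R) a :
  \sum_b laplacian ends w a b = 0.
Proof.
under eq_bigr do rewrite lapE.
rewrite sumrB (bigD1 a) //= eqxx mul1r.
rewrite [X in _ + X - _]big1 ?addr0 ?subrr // => b.
by rewrite eq_sym => /negbTE ->; rewrite mul0r.
Qed.

Lemma lap_mulE (R : realFieldType) (n : nat) (E : finType)
  (ends : E -> 'I_n * 'I_n) (w : E -> R) (y : 'rV[R]_n) a :
  (y *m laplacian ends w) 0 a = \sum_b adjmx ends w a b * (y 0 a - y 0 b).
Proof.
rewrite mxE.
under eq_bigr do rewrite lapE mulrBr.
rewrite sumrB (bigD1 a) //= eqxx mul1r [X in _ + X - _]big1 ?addr0; last first.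
  by move=> b /negbTE ->; rewrite mul0r mulr0.
under [in RHS]eq_bigr do rewrite mulrBr.
rewrite sumrB -big_distrl /= mulrC; congr (_ - _).
by apply: eq_bigr => b _; rewrite adj_sym mulrC.
Qed.


Lemma adj_ge0 (R : realFieldType) (n : nat) (E : finType)
  (ends : E -> 'I_n * 'I_n) (w : E -> R) (hw : pos_weights w) a b :
  0 <= adjmx ends w a b.
Proof. by rewrite mxE; apply: sumr_ge0 => e _; apply: ltW. Qed.

Lemma adj_gt0 (R : realFieldType) (n : nat) (E : finType)
  (ends : E -> 'I_n * 'I_n) (w : E -> R) (hw : pos_weights w) a b :
  adjacent ends a b -> 0 < adjmx ends w a b.
Proof.
move=> /existsP [e he]; rewrite mxE (bigD1 e) //=.
have h1 := hw e.
have h2 : 0 <= \sum_(i | joins ends i a b && (i != e)) w i.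
  by apply: sumr_ge0 => i _; apply: ltW.
lra.
Qed.

Lemma connect_eq (n : nat) (T : Type) (e : rel 'I_n) (f : 'I_n -> T) :
  (forall a b, e a b -> f a = f b) -> forall a b, connect e a b -> f a = f b.
Proof.
move=> H a b /connectP [p hp ->] {b}.
elim: p a hp => [|c p IH] a //= /andP [hac hp].
by rewrite (H _ _ hac); apply: IH.
Qed.

Lemma lap_ker (R : realFieldType) (n : nat) (E : finType)
  (ends : E -> 'I_n * 'I_n) (w : E -> R) (hw : pos_weights w)
  (hconn : connected_graph ends) (y : 'rV[R]_n) :
  y *m laplacian ends w = 0 -> forall a b, y 0 a = y 0 b.
Proof.
move=> hy.
set A := adjmx ends w.
have hrow : forall a, \sum_b A a b * (y 0 a - y 0 b) = 0.
  by move=> a; rewrite -lap_mulE hy mxE.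
have hQ : \sum_a \sum_b A a b * (y 0 a - y 0 b) ^+ 2 = 0.
  have -> : \sum_a \sum_b A a b * (y 0 a - y 0 b) ^+ 2 =
     \sum_a y 0 a * (\sum_b A a b * (y 0 a - y 0 b)) -
     \sum_b y 0 b * (\sum_a A a b * (y 0 a - y 0 b)).
    rewrite [X in _ = _ - X](eq_bigr (fun b => \sum_a y 0 b * (A a b * (y 0 a - y 0 b)))); last first.
      by move=> b _; rewrite big_distrr.
    rewrite [X in _ = _ - X]exchange_big /= -sumrB; apply: eq_bigr => a _.
    rewrite big_distrr -sumrB /=; apply: eq_bigr => b _.
    rewrite expr2; ring.
  rewrite big1 ?sub0r ?big1 ?oppr0 // => b _.
    have -> : \sum_a A a b * (y 0 a - y 0 b) = - \sum_a A b a * (y 0 b - y 0 a).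
      rewrite -sumrN; apply: eq_bigr => a _; rewrite /A adj_sym; ring.
    by rewrite hrow oppr0 mulr0.
  by rewrite hrow mulr0.
have hterm : forall a b, A a b * (y 0 a - y 0 b) ^+ 2 = 0.
  move=> a b.
  have hin : \sum_b A a b * (y 0 a - y 0 b) ^+ 2 = 0.
    apply: (psumr_eq0P _ hQ) => // a' _.
    by apply: sumr_ge0 => b' _; apply: mulr_ge0; [apply: adj_ge0|apply: sqr_ge0].
  apply: (psumr_eq0P _ hin) => // b' _.
  by apply: mulr_ge0; [apply: adj_ge0|apply: sqr_ge0].
have hadj : forall a b, adjacent ends a b -> y 0 a = y 0 b.
  move=> a b hab; have := hterm a b.
  have hp := @adj_gt0 _ _ _ _ _ hw _ _ hab.
  move/eqP; rewrite mulf_eq0 (gt_eqF hp) /= sqrf_eq0 subr_eq0.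
  by move/eqP.
move=> a b; exact: (@connect_eq _ _ _ (fun k => y 0 k) hadj _ _ (hconn a b)).
Qed.


Definition ext (R : pzRingType) (m : nat) (j : 'I_m.+2) (r : 'rV[R]_m.+1) : 'rV[R]_m.+2 :=
  \row_k (if unlift j k is Some k' then r 0 k' else 0).

Lemma ext_j (R : pzRingType) (m : nat) (j : 'I_m.+2) (r : 'rV[R]_m.+1) : ext j r 0 j = 0.
Proof. by rewrite mxE unlift_none. Qed.

Lemma ext_lift (R : pzRingType) (m : nat) (j : 'I_m.+2) (r : 'rV[R]_m.+1) k :
  ext j r 0 (lift j k) = r 0 k.
Proof. by rewrite mxE liftK. Qed.

Lemma sum_split (R : pzRingType) (m : nat) (j : 'I_m.+2) (f : 'I_m.+2 -> R) :
  \sum_k f k = f j + \sum_k f (lift j k).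
Proof. by rewrite (bigD1_ord j). Qed.

Lemma sum_pick (R : pzRingType) (n : nat) (f : 'I_n -> R) i :
  \sum_k f k * (k == i)%:R = f i.
Proof.
rewrite (bigD1 i) //= eqxx mulr1 big1 ?addr0 // => k /negbTE ->.
by rewrite mulr0.
Qed.

Lemma mulL_sum0 (R : realFieldType) (n : nat) (E : finType)
  (ends : E -> 'I_n * 'I_n) (w : E -> R) (y : 'rV[R]_n) :
  \sum_k (y *m laplacian ends w) 0 k = 0.
Proof.
under eq_bigr do rewrite mxE.
rewrite exchange_big /= big1 // => a _.
by rewrite -big_distrr /= lap_row0 mulr0.
Qed.

Lemma lap_one (R : realFieldType) (n : nat) (E : finType)
  (ends : E -> 'I_n * 'I_n) (w : E -> R) :
  laplacian ends w *m const_mx 1 = 0 :> 'cV[R]_n.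
Proof.
apply/matrixP => a b; rewrite !mxE.
under eq_bigr do rewrite [const_mx _ _ _]mxE mulr1.
by rewrite lap_row0.
Qed.

Lemma ext_mul (R : realFieldType) (m : nat) (E : finType)
  (ends : E -> 'I_m.+2 * 'I_m.+2) (w : E -> R) j (r : 'rV[R]_m.+1) k :
  (ext j r *m laplacian ends w) 0 (lift j k) = (r *m del_mx j (laplacian ends w)) 0 k.
Proof.
rewrite !mxE (sum_split j) ext_j mul0r add0r.
by apply: eq_bigr => a _; rewrite ext_lift /del_mx !mxE.
Qed.

Lemma del_unit (R : realFieldType) (m : nat) (E : finType)
  (ends : E -> 'I_m.+2 * 'I_m.+2) (w : E -> R) (hw : pos_weights w)
  (hconn : connected_graph ends) j :
  del_mx j (laplacian ends w) \in unitmx.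
Proof.
rewrite unitmxE unitfE; apply/det0P => -[v nz hv].
set z := ext j v.
have hoff : forall k, (z *m laplacian ends w) 0 (lift j k) = 0.
  by move=> k; rewrite ext_mul hv mxE.
have hzL : z *m laplacian ends w = 0.
  apply/rowP => k; rewrite [RHS]mxE.
  case: (unliftP j k) => [kk ->|->]; first exact: hoff.
  have hs := @mulL_sum0 _ _ _ ends w z.
  have h0 : \sum_k (z *m laplacian ends w) 0 (lift j k) = 0.
    by apply: big1 => k' _; exact: hoff.
  by rewrite (sum_split j) h0 addr0 in hs.
have hk := lap_ker hw hconn hzL.
move/eqP: nz; apply; apply/rowP => k.
by rewrite [RHS]mxE -(ext_lift j v k) -/z (hk _ j) ext_j.
Qed.


Lemma sub_idxK (m : nat) (i j : 'I_m.+2) : i != j -> lift j (sub_idx j i) = i.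
Proof.
rewrite /sub_idx; case: unliftP => [k ->|->] //.
by rewrite eqxx.
Qed.

Lemma MP_one (R : realFieldType) (m : nat) (E : finType)
  (ends : E -> 'I_m.+2 * 'I_m.+2) (w : E -> R) (P : 'M[R]_m.+2)
  (hP : is_MP_inverse (laplacian ends w) P) :
  P *m (const_mx 1 : 'cV[R]_m.+2) = 0.
Proof.
case: hP => h1 h2 h3 h4.
have -> : P = P *m P^T *m laplacian ends w.
  by rewrite -{1}h2 -mulmxA -h3 trmx_mul lap_sym mulmxA.
by rewrite -!mulmxA lap_one !mulmx0.
Qed.

Lemma main_row (R : realFieldType) (m : nat) (E : finType)
  (ends : E -> 'I_m.+2 * 'I_m.+2) (w : E -> R) (hw : pos_weights w)
  (hconn : connected_graph ends) (P : 'M[R]_m.+2)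
  (hP : is_MP_inverse (laplacian ends w) P) (i j : 'I_m.+2) (hij : i != j) :
  rowsum (invmx (del_mx j (laplacian ends w))) (sub_idx j i) =
  - (m.+2)%:R * ((delta_mx 0 i - delta_mx 0 j : 'rV[R]_m.+2) *m P) 0 j.
Proof.
set L := laplacian ends w.
set u : 'rV[R]_m.+2 := delta_mx 0 i - delta_mx 0 j.
set i' := sub_idx j i.
have hi : lift j i' = i by apply: sub_idxK.
set M := invmx (del_mx j L).
have hU : del_mx j L \in unitmx by apply: del_unit.
set z := ext j (row i' M).
have hoff : forall k, (z *m L) 0 (lift j k) = (k == i')%:R.
  move=> k; rewrite ext_mul -row_mul mulVmx // !mxE.
  by rewrite eq_sym.
have hz : z *m L = u.
  apply/rowP => k; rewrite /u ![in RHS]mxE /=.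
  case: (unliftP j k) => [k' ->|->].
    rewrite hoff -hi (inj_eq lift_inj) eq_sym (eq_sym (lift j k')).
    by rewrite (negbTE (neq_lift j k')) subr0 eq_sym.
  have hs := @mulL_sum0 _ _ _ ends w z.
  rewrite (sum_split j) in hs.
  have h1 : \sum_k (z *m laplacian ends w) 0 (lift j k) = 1.
    under eq_bigr do rewrite hoff.
    rewrite (bigD1 i') //= eqxx big1 ?addr0 // => k0 /negbTE ->; done.
  rewrite h1 in hs.
  rewrite eqxx eq_sym (negbTE hij) sub0r.
  by apply/eqP; rewrite -addr_eq0; apply/eqP; exact: hs.
have hker : (z - u *m P) *m L = 0.
  rewrite mulmxBl -hz.
  have -> : z *m L *m P *m L = z *m (L *m P *m L) by rewrite !mulmxA.
  by case: hP => -> _ _ _; rewrite subrr.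
have hk := lap_ker hw hconn hker.
have hzk : forall k, z 0 k = (u *m P) 0 k - (u *m P) 0 j.
  move=> k; have := hk k j; rewrite [X in X = _]mxE [X in _ = X]mxE.
  rewrite [(- (u *m P)) 0 k]mxE [(- (u *m P)) 0 j]mxE {2}/z ext_j.
  move=> e; lra.
have hsum0 : \sum_k (u *m P) 0 k = 0.
  have := MP_one hP.
  move/(congr1 (fun X : 'cV_m.+2 => (u *m X) 0 0)).
  rewrite mulmxA mulmx0 !mxE.
  under eq_bigr do rewrite [const_mx _ _ _]mxE mulr1.
  by [].
rewrite /rowsum.
have -> : \sum_l M i' l = \sum_k z 0 k.
  rewrite (sum_split j) ext_j add0r; apply: eq_bigr => l _.
  by rewrite ext_lift mxE.
under eq_bigr do rewrite hzk.
rewrite sumrB hsum0 sumr_const card_ord sub0r -mulr_natl mulNr.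
by rewrite mulr1 mulr_natl.
Qed.

End Helpers.
Import Helpers.

Theorem corollary8 (R : realFieldType) (m : nat) (E : finType)
    (ends : E -> 'I_m.+2 * 'I_m.+2) (w : E -> R)
    (hw : pos_weights w) (hconn : connected_graph ends)
    (Lp : 'M[R]_m.+2) (hLp : is_MP_inverse (laplacian ends w) Lp)
    (i j : 'I_m.+2) (hij : i != j) :
  resistance Lp i j =
    (m.+2)%:R^-1 *
      (rowsum (invmx (del_mx j (laplacian ends w))) (sub_idx j i)
       + rowsum (invmx (del_mx i (laplacian ends w))) (sub_idx i j)).
Proof.
have hji : j != i by rewrite eq_sym.
rewrite (main_row hw hconn hLp hij) (main_row hw hconn hLp hji).
set u : 'rV[R]_m.+2 := delta_mx 0 i - delta_mx 0 j.
have hu : (delta_mx 0 j - delta_mx 0 i : 'rV[R]_m.+2) = - u by rewrite opprB.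
rewrite hu mulNmx.
rewrite [(- (u *m Lp)) 0 i]mxE.
have -> : resistance Lp i j = (u *m Lp) 0 i - (u *m Lp) 0 j.
  rewrite /resistance /=.
  have hv : (delta_mx i 0 - delta_mx j 0 : 'cV[R]_m.+2) = u^T.
    by rewrite /u linearB /= !trmx_delta.
  have hu' : forall k, u 0 k = (k == i)%:R - (k == j)%:R by move=> k; rewrite !mxE.
  rewrite hv trmxK mxE.
  under eq_bigr do rewrite [u^T _ _]mxE hu' mulrBr.
  by rewrite sumrB !sum_pick.
have hn : (m.+2)%:R != 0 :> R by rewrite pnatr_eq0.
field. apply: lt0r_neq0; have := ler0n R m; lra.
Qed.
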